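(* Let $S,T\subseteq\mathbb{Z}_{>0}$ be finite with $T\preceq S$ and $|T|>|S|$. Let $y\in T$ be the smallest element such that $T\setminus\{y\}\preceq S$. Then: (1) for every $j$ with $T(j)<y$, $(T\triangleleft S)(j)=T(j)$; (2) $y\notin T\triangleleft S$; (3) for every $S'\subseteq S$, $(T\setminus\{y\})\triangleleft S'=T\triangleleft S'$.
   Context: For a finite set $S\subseteq\mathbb{Z}_{>0}$, $S(i)$ denotes its $i$th smallest element. $T\preceq S$ means $|T|\ge|S|$ and $T(i)<S(i)$ for all $i\in[|S|]$. For finite $S,T$, $T\triangleleft S$ is computed by going through $S$ from largest to smallest; each $s$ picks the largest element of $T$ less than $s$ not yet picked (if one exists); $T\triangleleft S$ is the set of picked elements. *)

(* Defs.v *)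
From mathcomp Require Import all_boot finmap.
Set Implicit Arguments. Unset Strict Implicit. Unset Printing Implicit Defensive.
Local Open Scope fset_scope.

(* S(i): the i-th smallest element of S, 1-indexed (meaningful for 1 <= i <= #|S|). *)
Definition elem (S : {fset nat}) (i : nat) : nat :=
  nth 0 (sort leq (enum_fset S)) i.-1.

Definition prec (T S : {fset nat}) : Prop :=
  (#|` S| <= #|` T|)%N /\
  forall i : nat, (1 <= i <= #|` S|)%N -> (elem T i < elem S i)%N.

(* One step of T ◁ S: element s picks the largest not-yet-picked t in T with t < s. *)
Definition tri_step (T : {fset nat}) (P : {fset nat}) (s : nat) : {fset nat} :=
  let c := [seq t <- sort leq (enum_fset T) | (t < s)%N && (t \notin P)] in
  if c is [::] then P else (last 0 c) |` P.

Definition tri (T S : {fset nat}) : {fset nat} :=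
  foldl (tri_step T) fset0 (rev (sort leq (enum_fset S))).

(* Main.v *)
Require Import Defs.
From mathcomp Require Import all_boot finmap.
From mathcomp Require Import zify.
Set Implicit Arguments. Unset Strict Implicit. Unset Printing Implicit Defensive.
Local Open Scope fset_scope.
Local Open Scope nat_scope.

Lemma cnt_split (s : seq nat) (p q : pred nat) :
  count p s = count (fun z => p z && q z) s + count (fun z => p z && ~~ q z) s.
Proof. elim: s => //= h s ->; case: (p h); case: (q h) => /=; lia. Qed.

Lemma cnt_subp (s1 s2 : seq nat) (p : pred nat) : uniq s1 ->
  (forall z, p z -> z \in s1 -> z \in s2) -> count p s1 <= count p s2.
Proof.
move=> u1 H; rewrite -!size_filter; apply: uniq_leq_size; first exact: filter_uniq.
by move=> z; rewrite !mem_filter => /andP[pz zs]; rewrite pz (H z pz zs).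
Qed.

Lemma cnt_ext (s1 s2 : seq nat) (p : pred nat) : uniq s1 -> uniq s2 ->
  (forall z, p z -> (z \in s1) = (z \in s2)) -> count p s1 = count p s2.
Proof.
move=> u1 u2 H; apply/eqP; rewrite eqn_leq; apply/andP; split; apply: cnt_subp => //.
  by move=> z pz; rewrite H.
by move=> z pz; rewrite H.
Qed.

Lemma cnt_mono (s : seq nat) (p q : pred nat) :
  (forall z, z \in s -> p z -> q z) -> count p s <= count q s.
Proof.
elim: s => //= h s IH H.
have H1 : count p s <= count q s by apply: IH => z zs; apply: H; rewrite inE zs orbT.
case ph: (p h); last by lia.
by rewrite (H h (mem_head _ _) ph); lia.
Qed.

Lemma cnt_one (s : seq nat) (p : pred nat) x : uniq s -> x \in s ->
  count p s = count (fun z => p z && (z != x)) s + p x.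
Proof.
elim: s => //= h s IH /andP[hs us]; rewrite inE => /orP[/eqP->|xs].
  rewrite eqxx andbF /=.
  have -> : count (fun z => p z && (z != h)) s = count p s.
    apply: eq_in_count => z zs; have -> : (z != h) by apply: contraNneq hs => <-.
    by rewrite andbT.
  lia.
rewrite (IH us xs).
have -> : (h != x) by apply: contraNneq hs => ->.
rewrite andbT; lia.
Qed.

Lemma sorted_nth_lt (l : seq nat) i a : sorted ltn l -> i < size l ->
  (nth 0 l i < a) = (i < count (fun x => x < a) l).
Proof.
elim: l i => //= h l IH i Hp.
have Hall := order_path_min ltn_trans Hp.
have Hs := path_sorted Hp.
case: (ltnP h a) => ha.
  case: i => [|i] //= Hi; rewrite IH //; lia.
have c0 : count (fun x => x < a) l = 0.
  apply/eqP; rewrite -leqn0 -(count_pred0 l); apply: cnt_mono => z zs /=.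
  move/allP: Hall => /(_ z zs); lia.
rewrite c0 /=; case: i => [|i] Hi /=; first by lia.
have : nth 0 l i \in l by apply: mem_nth.
move/allP: Hall => H /H; lia.
Qed.

Definition srt (X : {fset nat}) := sort leq (enum_fset X).

Lemma srt_sorted X : sorted ltn (srt X).
Proof.
by rewrite ltn_sorted_uniq_leq sort_uniq fset_uniq sort_sorted //; exact: leq_total.
Qed.

Lemma cnt_srt X p : count p (srt X) = count p (enum_fset X).
Proof. by apply/permP; rewrite perm_sort. Qed.

Lemma size_srt X : size (srt X) = #|` X|.
Proof. by rewrite size_sort. Qed.

Lemma mem_srt X z : (z \in srt X) = (z \in X).
Proof. by rewrite mem_sort. Qed.

Lemma elemE X i a : 1 <= i <= #|` X| ->
  (elem X i < a) = (i <= count (fun x => x < a) (enum_fset X)).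
Proof.
case: i => // i /andP[_ iX].
by rewrite /elem -cnt_srt sorted_nth_lt ?srt_sorted ?size_srt.
Qed.

Lemma cnt_le_lt (s : seq nat) a :
  count (fun x => x < a.+1) s = count (fun x => x <= a) s.
Proof. by apply: eq_count => z; rewrite ltnS. Qed.

Lemma PC X U : prec X U -> forall a,
  count (fun u => u <= a) (enum_fset U) <= count (fun x => x < a) (enum_fset X).
Proof.
move=> [HUX Hi] a.
set c := count _ _.
case: (posnP c) => [->//|c0].
have cU : c <= #|` U| by apply: count_size.
have H1 : elem U c < a.+1 by rewrite elemE ?cnt_le_lt //; lia.
have H2 := Hi c ltac:(lia).
have : elem X c < a by lia.
rewrite elemE //; lia.
Qed.

Lemma CP X U : #|` U| <= #|` X| -> (forall a,
  count (fun u => u <= a) (enum_fset U) <= count (fun x => x < a) (enum_fset X)) ->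
  prec X U.
Proof.
move=> HUX H; split => // i Hi.
have H1 : elem U i < (elem U i).+1 by [].
rewrite elemE // cnt_le_lt in H1.
rewrite elemE; last by lia.
exact: leq_trans H1 (H _).
Qed.

Lemma sorted_le_last (h : nat) c t : sorted leq (h :: c) -> t \in h :: c -> t <= last h c.
Proof.
elim: c h t => [|h2 c IH] h t /=; first by rewrite inE => _ /eqP->.
move=> /andP[hh2 Hp]; rewrite inE => /orP[/eqP->|tin].
  apply: leq_trans hh2 _; apply: IH => //; exact: mem_head.
exact: IH.
Qed.

Lemma TS T P s :
  (tri_step T P s = P /\ forall t, t \in T -> t < s -> t \in P) \/
  exists x, [/\ x \in T, x < s, x \notin P,
    (forall t, t \in T -> t < s -> t \notin P -> t <= x) &
    tri_step T P s = x |` P].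
Proof.
rewrite /tri_step.
have Hsort : sorted leq [seq t <- sort leq (enum_fset T) | (t < s) && (t \notin P)].
  by apply: sorted_filter; [exact: leq_trans | apply: sort_sorted; exact: leq_total].
have Hmem : forall t, (t \in [seq t <- sort leq (enum_fset T) | (t < s) && (t \notin P)])
   = [&& t < s, t \notin P & t \in T] by move=> t; rewrite mem_filter mem_sort andbA.
move: Hsort Hmem.
case: [seq t <- sort leq (enum_fset T) | (t < s) && (t \notin P)] => [|h c] Hsort Hmem.
  left; split => // t tT ts; apply/negPn/negP => tP.
  by have := Hmem t; rewrite ts tP tT.
right; exists (last h c).
have : last h c \in h :: c by apply: mem_last.
rewrite Hmem => /and3P[H1 H2 H3]; split => // t tT ts tP.
by apply: sorted_le_last => //; rewrite Hmem ts tP tT.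
Qed.

Lemma step_mono T P s : P `<=` tri_step T P s.
Proof.
case: (TS T P s) => [[-> _]|[x [_ _ _ _ ->]]]; first exact: fsubset_refl.
by apply/fsubsetP => z zP; rewrite in_fset1U zP orbT.
Qed.

Lemma fold_mono T r P : P `<=` foldl (tri_step T) P r.
Proof.
elim: r P => [|s r IH] P /=; first exact: fsubset_refl.
exact: fsubset_trans (step_mono T P s) (IH _).
Qed.

Lemma step_eq T P s y : y \notin tri_step T P s ->
  tri_step (T `\ y) P s = tri_step T P s.
Proof.
case: (TS T P s) => [[-> H]|[x [xT xs xP xmax ->]]] yn.
  case: (TS (T `\ y) P s) => [[-> _]//|[x' [x'T x's x'P _ _]]].
  by move: x'T; rewrite in_fsetD1 => /andP[_ /H] /(_ x's); rewrite (negPf x'P).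
have xy : x != y by apply: contraNneq yn => <-; rewrite in_fset1U eqxx.
case: (TS (T `\ y) P s) => [[_ H]|[x' [x'T x's x'P x'max ->]]].
  by have := H x; rewrite in_fsetD1 xy xT (negPf xP) => /(_ isT xs).
move: (x'T); rewrite in_fsetD1 => /andP[_ x'T'].
have e1 := xmax x' x'T' x's x'P.
have e2 : x <= x' by apply: x'max => //; rewrite in_fsetD1 xy xT.
by have -> : x' = x by apply/eqP; rewrite eqn_leq e1 e2.
Qed.

Lemma fold_eq T y r P : y \notin foldl (tri_step T) P r ->
  foldl (tri_step (T `\ y)) P r = foldl (tri_step T) P r.
Proof.
elim: r P => [|s r IH] P //= yn.
have ys : y \notin tri_step T P s.
  by apply: contra yn => H; apply: (fsubsetP (fold_mono T r _)).
by rewrite step_eq // IH.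
Qed.

Lemma geq_trans : transitive (fun a b : nat => b <= a).
Proof. move=> b a c /= H1 H2; exact: leq_trans H2 H1. Qed.

Lemma G T (q : pred nat) r P : sorted (fun a b => b <= a) r ->
  (forall t w u, t \in T -> t \notin P -> ~~ q t -> w \in T -> q w -> u \in r ->
      t < u -> t < w) ->
  (forall a, count (fun u => u <= a) r <=
      count (fun t => [&& q t, t \notin P & t < a]) (enum_fset T)) ->
  [/\ P `<=` foldl (tri_step T) P r,
      (forall z, z \in foldl (tri_step T) P r -> z \in P \/ (z \in T /\ q z)) &
      #|` foldl (tri_step T) P r| = #|` P| + size r].
Proof.
elim: r P => [|u r IH] P Hs Hseg HC /=.
  split; [exact: fsubset_refl | by move=> z; left | by rewrite addn0].
have Hall : all (fun b => b <= u) r := order_path_min geq_trans Hs.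
have Hsr := path_sorted Hs.
have HCu := HC u; rewrite /= leqnn in HCu.
have Hszr : count (fun b => b <= u) r = size r by apply/eqP; rewrite -all_count.
have /hasP [w wT /and3P[qw wP wu]] : has (fun t => [&& q t, t \notin P & t < u]) (enum_fset T).
  by rewrite has_count; lia.
have wT' : w \in T by [].
case: (TS T P u) => [[_ H]|[x [xT xu xP xmax Ex]]].
  by have := H w wT' wu; rewrite (negPf wP).
have xq : q x.
  apply/negPn/negP => nq.
  have := Hseg x w u xT xP nq wT' qw (mem_head _ _) xu.
  have := xmax w wT' wu wP; move=> h1 h2; move: h2; rewrite ltnNge h1.
  done.
rewrite Ex.
have Hseg' : forall t w' u', t \in T -> t \notin x |` P -> ~~ q t -> w' \in T -> q w' ->
    u' \in r -> t < u' -> t < w'.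
  move=> t w' u' tT; rewrite in_fset1U negb_or => /andP[_ tP] nq w'T qw' u'r.
  by apply: Hseg => //; rewrite inE u'r orbT.
have HC' : forall a, count (fun u => u <= a) r <=
      count (fun t => [&& q t, t \notin x |` P & t < a]) (enum_fset T).
  move=> a.
  have Eone := cnt_one (fun t => [&& q t, t \notin P & t < a]) (fset_uniq T) xT.
  have -> : count (fun t => [&& q t, t \notin x |` P & t < a]) (enum_fset T) =
       count (fun t => [&& q t, t \notin P & t < a] && (t != x)) (enum_fset T).
    apply: eq_count => t; rewrite /= in_fset1U negb_or.
    by case: (q t); case: (t == x); case: (t \in P); case: (t < a).
  have HCa := HC a; rewrite /= in HCa; rewrite /= xq xP /= in Eone.
  case: (leqP u a) => ua.
    have xa : x < a by exact: leq_trans xu ua.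
    rewrite ua in HCa; rewrite xa in Eone; move: HCa Eone; clear; lia.
  have uaf : (u <= a) = false by rewrite leqNgt ua.
  rewrite uaf in HCa.
  case: (leqP a x) => ax.
    have xaf : (x < a) = false by rewrite ltnNge ax.
    rewrite xaf in Eone; move: HCa Eone; clear; lia.
  have Hm : count (fun t => [&& q t, t \notin P & t < u]) (enum_fset T) <=
              count (fun t => [&& q t, t \notin P & t < a]) (enum_fset T).
    apply: cnt_mono => z zT /and3P[qz zP zu]; rewrite qz zP /=.
    exact: leq_ltn_trans (xmax z zT zu zP) ax.
  have := count_size (fun u0 => u0 <= a) r; rewrite ax in Eone.
  move: Eone HCa Hm HCu Hszr; clear; lia.
have [H1 H2 H3] := IH (x |` P) Hsr Hseg' HC'.
split.
- exact: fsubset_trans (fsubsetU1 _ _) H1.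
- move=> z /H2 [|]; last by right.
  by rewrite in_fset1U => /orP[/eqP->|]; [right | left].
- by rewrite H3 cardfsU1 xP /= add1n addSn addnS.
Qed.

Lemma split_geq y (l : seq nat) : sorted (fun a b => b <= a) l ->
  filter (fun s => y < s) l ++ filter (fun s => s <= y) l = l.
Proof.
elim: l => //= h l IH Hp.
have Hall : all (fun b => b <= h) l := order_path_min geq_trans Hp.
have Hs := path_sorted Hp.
case: (ltnP y h) => hy /=.
  by rewrite (IH Hs).
have -> : filter (fun s => y < s) l = [::].
  apply/eqP; rewrite -size_eq0 size_filter; apply/eqP/eqP; rewrite -leqn0.
  rewrite -(count_pred0 l); apply: cnt_mono => z zl /=.
  by move/allP: Hall => /(_ z zl); lia.
have -> // : filter (fun s => s <= y) l = l.
apply/all_filterP/allP => z zl; move/allP: Hall => /(_ z zl); lia.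
Qed.

Lemma cnt_D1 (T : {fset nat}) z (p : pred nat) : z \in T ->
  count p (enum_fset (T `\ z)) = count (fun t => p t && (t != z)) (enum_fset T).
Proof.
move=> zT.
rewrite -(@eq_in_count _ (fun t => p t && (t != z))); last first.
  by move=> t; rewrite in_fsetD1 => /andP[-> _]; rewrite andbT.
apply: cnt_ext; try exact: fset_uniq.
by move=> t /andP[_ tz]; rewrite in_fsetD1 tz.
Qed.

Theorem lemma4p17 (S T : {fset nat})
  (HSpos : forall x, x \in S -> (0 < x)%N)
  (HTpos : forall x, x \in T -> (0 < x)%N)
  (HTS : prec T S) (Hcard : (#|` S| < #|` T|)%N)
  (y : nat) (Hy : y \in T) (Hyprec : prec (T `\ y) S)
  (Hymin : forall z, z \in T -> prec (T `\ z) S -> (y <= z)%N) :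
  [/\ (forall j : nat, (1 <= j <= #|` T|)%N -> (elem T j < y)%N ->
         elem (tri T S) j = elem T j),
      y \notin tri T S
    & forall S' : {fset nat}, S' `<=` S -> tri (T `\ y) S' = tri T S'].
Proof.
have H1 := PC HTS.
have H2 : forall a, count (fun u => u <= a) (enum_fset S) <=
    count (fun t => (t < a) && (t != y)) (enum_fset T).
  by move=> a; rewrite -cnt_D1 //; apply: PC.
have H3 : count (fun t => t < y) (enum_fset T) <= count (fun s => s <= y) (enum_fset S).
  rewrite leqNgt; apply/negP => Hlt.
  case: (TS T fset0 y) => [[_ H]|[z [zT zy _ zmax _]]].
    have : count (fun t => t < y) (enum_fset T) <= count pred0 (enum_fset T).
      by apply: cnt_mono => t tT ty; have := H t tT ty; rewrite in_fset0.
    rewrite count_pred0; lia.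
  have zmax' : forall t, t \in T -> t < y -> t <= z by move=> t tT ty; apply: zmax.
  have : prec (T `\ z) S.
    apply: CP; first by move: Hcard; rewrite (cardfsD1 z T) zT add1n ltnS.
    move=> a; rewrite cnt_D1 //.
    have E := cnt_one (fun t => t < a) (fset_uniq T) zT; rewrite /= in E.
    case: (leqP a z) => az.
      have := H1 a; have zaf : (z < a) = false by lia.
      rewrite zaf in E.
      lia.
    case: (leqP a y) => ay.
      have Ey : count (fun t => t < a) (enum_fset T) = count (fun t => t < y) (enum_fset T).
        apply: eq_in_count => t tT; apply/idP/idP => h; first by lia.
        by have := zmax' t tT h; lia.
      have Ma : count (fun u => u <= a) (enum_fset S) <= count (fun s => s <= y) (enum_fset S).
        by apply: cnt_mono => s _ /=; lia.
      rewrite az in E; lia.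
    have := H2 a.
    have Ey := cnt_one (fun t => t < a) (fset_uniq T) Hy; rewrite /= in Ey.
    rewrite az in E; rewrite ay in Ey; lia.
  by move/(Hymin z zT); lia.
have key : forall S', S' `<=` S -> exists R1 : {fset nat},
   [/\ (forall z, z \in R1 -> z \in T /\ y < z), R1 `<=` tri T S',
       (forall z, z \in tri T S' -> z \in R1 \/ (z \in T /\ z < y)) &
       #|` tri T S'| = #|` R1| + count (fun s => s <= y) (enum_fset S')].
  move=> S' sub.
  have Hl : sorted (fun a b => b <= a) (rev (srt S')).
    by rewrite rev_sorted; apply: sort_sorted; exact: leq_total.
  have cl : forall p, count p (rev (srt S')) = count p (enum_fset S').
    by move=> p; rewrite count_rev cnt_srt.
  have sub' : forall p, count p (enum_fset S') <= count p (enum_fset S).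
    by move=> p; apply: cnt_subp; [exact: fset_uniq | move=> z _ zS'; exact: (fsubsetP sub)].
  rewrite /tri -/(srt S') -(split_geq y Hl) foldl_cat.
  set l1 := filter (fun s => y < s) (rev (srt S')).
  set l2 := filter (fun s => s <= y) (rev (srt S')).
  have C1 : forall a, count (fun u => u <= a) l1 <=
      count (fun t => [&& y < t, t \notin fset0 & t < a]) (enum_fset T).
    move=> a; rewrite count_filter cl.
    apply: leq_trans (sub' _) _.
    case: (leqP a y) => ay.
      have : count (predI (fun u => u <= a) (fun s => y < s)) (enum_fset S) <=
             count pred0 (enum_fset S) by apply: cnt_mono => s _ /=; lia.
      by rewrite count_pred0 leqn0 => /eqP ->.
    have E1 : count (fun u => u <= a) (enum_fset S) =
      count (fun z => (z <= a) && (y < z)) (enum_fset S) +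
      count (fun z => (z <= a) && ~~ (y < z)) (enum_fset S) := cnt_split _ _ _.
    have E2 : count (fun t => (t < a) && (t != y)) (enum_fset T) =
      count (fun z => (z < a) && (z != y) && (y < z)) (enum_fset T) +
      count (fun z => (z < a) && (z != y) && ~~ (y < z)) (enum_fset T) := cnt_split _ _ _.
    have F1 : count (fun z => (z <= a) && ~~ (y < z)) (enum_fset S) =
              count (fun s => s <= y) (enum_fset S) by apply: eq_count => s /=; lia.
    have F2 : count (fun z => (z < a) && (z != y) && ~~ (y < z)) (enum_fset T) =
              count (fun t => t < y) (enum_fset T) by apply: eq_count => s /=; lia.
    have F3 : count (fun z => (z < a) && (z != y) && (y < z)) (enum_fset T) =
              count (fun t => [&& y < t, t \notin fset0 & t < a]) (enum_fset T).
      by apply: eq_count => s /=; lia.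
    have F4 : count (predI (fun u => u <= a) (fun s => y < s)) (enum_fset S) =
              count (fun z => (z <= a) && (y < z)) (enum_fset S) by [].
    apply: (@leq_trans (count (fun z => (z <= a) && (y < z)) (enum_fset S))); first exact: leqnn.
    rewrite -F3; have := H2 a; lia.
  have [A1 A2 A3] := @G T (fun t => y < t) l1 fset0
    (sorted_filter geq_trans _ Hl)
    ltac:(move=> t w u _ _ nq _ qw _ _; lia) C1.
  set R1 := foldl (tri_step T) fset0 l1.
  have R1y : forall z, z \in R1 -> z \in T /\ y < z.
    by move=> z /A2 [|//]; rewrite in_fset0.
  have C2 : forall a, count (fun u => u <= a) l2 <=
      count (fun t => [&& t < y, t \notin R1 & t < a]) (enum_fset T).
    move=> a; rewrite count_filter cl.
    apply: leq_trans (sub' _) _.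
    have F1 : count (predI (fun u => u <= a) (fun s => s <= y)) (enum_fset S) =
              count (fun u => u <= minn a y) (enum_fset S) by apply: eq_count => s /=; lia.
    have F2 : count (fun t => [&& t < y, t \notin R1 & t < a]) (enum_fset T) =
              count (fun t => t < minn a y) (enum_fset T).
      apply: eq_in_count => t tT /=.
      by case: (boolP (t \in R1)) => tR; [ have := R1y t tR; lia | lia ].
    rewrite F1 F2; exact: H1.
  have [B1 B2 B3] := @G T (fun t => t < y) l2 R1
    (sorted_filter geq_trans _ Hl)
    ltac:(move=> t w u _ _ nq _ _; rewrite mem_filter => /andP[uy _]; lia) C2.
  exists R1; split => //.
  by rewrite B3 /l2 size_filter cl.
have yn : forall S', S' `<=` S -> y \notin tri T S'.
  move=> S' /key [R1 [K1 _ K3 _]]; apply/negP => /K3 [/K1|]; lia.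
split; last first.
- by move=> S' sub; rewrite /tri fold_eq //; apply: yn.
- exact: yn (fsubset_refl S).
move=> j Hj ej.
have [R1 [K1 K2 K3 K4]] := key S (fsubset_refl S).
set R := tri T S in K2 K3 K4 *.
have cRlo : count (fun t => t < y) (enum_fset T) <= count (fun t => t < y) (enum_fset R).
  have E : count (fun t => t < y) (enum_fset R) + count (fun t => ~~ (t < y)) (enum_fset R)
     = #|` R| := count_predC _ _.
  have : count (fun t => ~~ (t < y)) (enum_fset R) <= count (fun t => ~~ (t < y)) (enum_fset R1).
    apply: cnt_subp; first exact: fset_uniq.
    move=> z /= zy /K3 [//|]; lia.
  have : count (fun t => ~~ (t < y)) (enum_fset R1) <= #|` R1| := count_size _ _.
  move: E K4 H3; clear; lia.
have [_ Heq] := @uniq_min_size _ (filter (fun t => t < y) (enum_fset R))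
    (filter (fun t => t < y) (enum_fset T)) (filter_uniq _ (fset_uniq R))
    ltac:(move=> z; rewrite !mem_filter => /andP[zy /K3 [/K1 |]]; [lia | by case=> ->; rewrite zy])
    ltac:(by rewrite !size_filter).
have ceq : forall a, a <= y -> count (fun t => t < a) (enum_fset R) = count (fun t => t < a) (enum_fset T).
  move=> a ay; apply: cnt_ext; try exact: fset_uniq.
  move=> z za; have := Heq z; rewrite !mem_filter.
  by have -> : z < y by lia.
have jy : j <= count (fun t => t < y) (enum_fset T) by rewrite -elemE.
have jR : 1 <= j <= #|` R|.
  have := count_size (fun t => t < y) (enum_fset R); lia.
have fy : elem R j < y by rewrite elemE // ceq.
have e1 : elem T j < (elem R j).+1.
  by rewrite elemE // -ceq // -elemE.
have e2 : elem R j < (elem T j).+1.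
  by rewrite elemE // ceq // -elemE.
apply/eqP; rewrite eqn_leq; lia.
Qed.
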